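(* Let $\Gamma_n=\{P_1,\ldots,P_k\}$ with $k\ge3$, let $Q$ be a witness of $\Gamma_n$, and let $v_0,v_1,\ldots,v_r$ be a special path in $G_n(Q)$ of minimal length among all special paths in $G_n(Q)$; after reindexing, $v_0\cong P_1$, $v_1,\ldots,v_{r-1}\cong P_2$, $v_r\cong P_3$. Write $A=v_0$, $C=v_r$ (the anchor copies). Suppose the path contains at least two copies of $P_2$ (i.e. $r\ge 3$). Then (1) $\bigcup_{j=0}^r v_j=A\cup C$, and (2) the number of copies of $P_2$ on the path, $r-1$, equals $|A\setminus(A\cap C)|-1=|C\setminus(A\cap C)|-1$.
   Context: $\Gamma_n$ is a set of $k$ pairwise non-isomorphic posets of size $n$; $Q$ is a witness if the set of isomorphism classes of downsets of $Q$ of size $n$ is exactly $\Gamma_n$. The exchange graph $G_n(Q)$ has as vertices all downsets of $Q$ of size $n$ (as subsets), with an edge between two such downsets when they differ by exactly one element. A special path is a path $v_0,v_1,\ldots,v_r$ in $G_n(Q)$ with $r\ge 2$ such that for some three distinct indices $a,b,c$, $v_0\cong P_a$, $v_1,\ldots,v_{r-1}\cong P_b$, and $v_r\cong P_c$. *)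

(* Defs.v *)
From mathcomp Require Import all_boot.
Set Implicit Arguments. Unset Strict Implicit. Unset Printing Implicit Defensive.

Definition is_poset (T : finType) (le : rel T) : Prop :=
  [/\ reflexive le, antisymmetric le & transitive le].

(* An abstract poset of size n is represented on the carrier 'I_n. *)
Definition poset_iso (n : nat) (R1 R2 : rel 'I_n) : Prop :=
  exists s : 'I_n -> 'I_n, bijective s /\ forall x y, R1 x y = R2 (s x) (s y).

Definition downset (T : finType) (le : rel T) (D : {set T}) : Prop :=
  forall x y, le x y -> y \in D -> x \in D.

Definition sub_iso (T : finType) (le : rel T) (D : {set T}) (n : nat)
    (R : rel 'I_n) : Prop :=
  exists f : 'I_n -> T,
    [/\ injective f, D = [set f i | i in 'I_n] &
        forall i j, R i j = le (f i) (f j)].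

Definition Gvertex (T : finType) (le : rel T) (n : nat) (D : {set T}) : Prop :=
  downset le D /\ #|D| = n.

Definition Gadj (T : finType) (D1 D2 : {set T}) : Prop :=
  #|D1 :\: D2| = 1 /\ #|D2 :\: D1| = 1.

(* Gamma_n = {P_0, ..., P_(k-1)}: k pairwise non-isomorphic posets of size n. *)
Definition Gamma_family (n k : nat) (P : 'I_k -> rel 'I_n) : Prop :=
  (forall i, is_poset (P i)) /\
  (forall i j, i != j -> ~ poset_iso (P i) (P j)).

Definition witness (T : finType) (le : rel T) (n k : nat)
    (P : 'I_k -> rel 'I_n) : Prop :=
  is_poset le /\
  (forall D, Gvertex le n D -> exists i, sub_iso le D (P i)) /\
  (forall i, exists D, Gvertex le n D /\ sub_iso le D (P i)).

Definition Gpath (T : finType) (le : rel T) (n : nat)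
    (v : nat -> {set T}) (r : nat) : Prop :=
  [/\ forall j, j <= r -> Gvertex le n (v j),
      forall j, j < r -> Gadj (v j) (v j.+1) &
      forall i j, i <= r -> j <= r -> v i = v j -> i = j].

Definition special_path (T : finType) (le : rel T) (n k : nat)
    (P : 'I_k -> rel 'I_n) (v : nat -> {set T}) (r : nat) : Prop :=
  Gpath le n v r /\ 2 <= r /\
  exists a b c : 'I_k,
    [/\ [/\ a != b, b != c & a != c],
        sub_iso le (v 0) (P a),
        (forall j, 0 < j < r -> sub_iso le (v j) (P b)) &
        sub_iso le (v r) (P c)].

(* Main.v *)
Require Import Defs.
From mathcomp Require Import all_boot zify.
From Stdlib Require Import Classical.
Set Implicit Arguments. Unset Strict Implicit. Unset Printing Implicit Defensive.

Ltac alia :=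
  repeat match goal with
  | H : ?P |- _ =>
     lazymatch P with
     | is_true (leq _ _) => fail
     | @eq nat _ _ => fail
     | is_true (negb (@eq_op _ _ _)) => fail
     | nat => fail
     | @eq bool (leq _ _) _ => fail
     | @eq ?A ?x ?y => first [ unify A nat; fail 1 | clear H ]
     | is_true (andb (leq _ _) _) => fail
     | _ => clear H
     end
  end; lia.

Definition remp (T : finType) (v : nat -> {set T}) t u :=
  (u \in v t) && (u \notin v t.+1).
Definition addp (T : finType) (v : nat -> {set T}) t u :=
  (u \notin v t) && (u \in v t.+1).

Lemma adjP (T : finType) (A B : {set T}) :
  Gadj A B -> exists x y, A :\: B = [set x] /\ B :\: A = [set y].
Proof. by case=> /eqP/cards1P [x Hx] /eqP/cards1P [y Hy]; exists x, y. Qed.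

Lemma rem_uniq (T : finType) (A B : {set T}) u u' :
  Gadj A B -> u \in A -> u \notin B -> u' \in A -> u' \notin B -> u = u'.
Proof.
move=> /adjP [x [y [Hx _]]] hu hu' hv hv'.
have: u \in A :\: B by rewrite inE hu hu'.
have: u' \in A :\: B by rewrite inE hv hv'.
by rewrite Hx !inE => /eqP -> /eqP ->.
Qed.

Lemma Gadj_sym (T : finType) (A B : {set T}) : Gadj A B -> Gadj B A.
Proof. by case. Qed.

Lemma add_uniq (T : finType) (A B : {set T}) u u' :
  Gadj A B -> u \notin A -> u \in B -> u' \notin A -> u' \in B -> u = u'.
Proof. move/Gadj_sym=> H h1 h2 h3 h4; exact: (rem_uniq H h2 h1 h4 h3). Qed.

Lemma Gadj_C (T : finType) (A B : {set T}) : Gadj A B -> Gadj (~: A) (~: B).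
Proof.
have E: forall X Y : {set T}, ~: X :\: ~: Y = Y :\: X.
  by move=> X Y; apply/setP=> u; rewrite !inE negbK andbC.
by case=> h1 h2; split; rewrite E.
Qed.

Lemma flip_rem (T : finType) (v : nat -> {set T}) u a b :
  a <= b -> u \in v a -> u \notin v b -> exists p, a <= p < b /\ remp v p u.
Proof.
elim: b => [|b IH] hab ha hb.
  by move: hab; rewrite leqn0 => /eqP Ha; subst a; rewrite ha in hb.
case: (ltngtP a b.+1) hab => // [hlt|heq] _.
  case hub: (u \in v b).
    by exists b; rewrite /remp hub hb; split => //; lia.
  have hle : a <= b by lia.
  have [p [hp1 hp2]] := IH hle ha (negbT hub).
  by exists p; split => //; lia.
by subst; rewrite ha in hb.
Qed.

Lemma flip_add (T : finType) (v : nat -> {set T}) u a b :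
  a <= b -> u \notin v a -> u \in v b -> exists p, a <= p < b /\ addp v p u.
Proof.
move=> hab ha hb.
have h1 : u \in (fun t => ~: v t) a by rewrite inE.
have h2 : u \notin (fun t => ~: v t) b by rewrite inE negbK.
have [p [hp1 hp2]] := @flip_rem T (fun t => ~: v t) u a b hab h1 h2.
by exists p; split => //; move: hp2; rewrite /remp /addp !inE negbK.
Qed.

Lemma adj_crit (T : finType) (A B : {set T}) a :
  #|A| = #|B| -> (forall u, u \in A -> u \notin B -> u = a) -> A != B ->
  Gadj A B.
Proof.
move=> hc ha hne.
have sub : A :\: B \subset [set a].
  by apply/subsetP=> u; rewrite !inE => /andP [h1 h2]; rewrite (ha u h2 h1).
have le1 : #|A :\: B| <= 1 by rewrite -(cards1 a); apply: subset_leq_card.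
have E : #|B :\: A| = #|A :\: B| by rewrite !cardsD hc setIC.
have ne0 : #|A :\: B| != 0.
  apply/negP=> /eqP/eqP; rewrite cards_eq0 setD_eq0 => hAB.
  move: hne; rewrite eqEcard hAB hc leqnn //.
have h1 : #|A :\: B| = 1 by move: le1 ne0; case: #|A :\: B| => [|[|]].
by split; rewrite ?E h1.
Qed.

Lemma card_W (T : finType) (A B : {set T}) n z :
  Gadj A B -> #|A| = n -> #|B| = n -> z \in A :|: B -> #|(A :|: B) :\ z| = n.
Proof.
case=> h1 h2 hA hB hz.
have := cardsD1 z (A :|: B); rewrite hz.
have := cardsUI A B. have := cardsD A B. rewrite h1 hA hB.
have : #|A :&: B| <= n by rewrite -hA; apply: subset_leq_card; apply: subsetIl.
lia.
Qed.

Lemma vertexC (T : finType) (le : rel T) n (D : {set T}) :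
  Gvertex le n D -> Gvertex (fun x y => le y x) (#|T| - n) (~: D).
Proof.
case=> hd hc; split.
  move=> x y hxy; rewrite !inE; apply: contra => hx; exact: hd hxy hx.
by rewrite cardsCs setCK hc.
Qed.

Lemma vertexCr (T : finType) (le : rel T) n (D : {set T}) :
  n <= #|T| -> Gvertex (fun x y => le y x) (#|T| - n) (~: D) -> Gvertex le n D.
Proof.
move=> hn [hd hc]; split.
  move=> x y hxy hy; apply/negPn/negP=> hx.
  have := hd y x hxy; rewrite !inE => /(_ hx); by rewrite hy.
have hD := max_card (mem D). have hC := cardsC D. lia.
Qed.

Definition Wk (T : finType) (v : nat -> {set T}) z t := (v t :|: v t.+1) :\ z.

Lemma core (T : finType) (le : rel T) (n : nat) (v : nat -> {set T}) (i m : nat) (z : T) :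
  (forall t, t <= m.+1 -> Gvertex le n (v t)) ->
  (forall t, t <= m -> Gadj (v t) (v t.+1)) ->
  i < m -> addp v i z -> remp v m z ->
  (forall p q u, i <= p -> p < q -> q <= m -> q - p < m - i ->
     ~~ (addp v p u && remp v q u) /\ ~~ (remp v p u && addp v q u)) ->
  v i != v i.+2 ->
  [/\ Wk v z m = v m.+1,
      forall t, i < t <= m -> Gvertex le n (Wk v z t),
      Gadj (v i) (Wk v z i.+1),
      forall t, i < t < m -> Gadj (Wk v z t) (Wk v z t.+1) &
      forall t, i < t < m -> Gadj (v t) (Wk v z t) /\ Gadj (Wk v z t) (v t.+1)].
Proof.
move=> hV hA him hadd hrem IH hne.
have [hzi hzi1] := andP hadd.
have [hzm hzm1] := andP hrem.
have F1 : forall t, i < t <= m -> z \in v t.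
  move=> t /andP [h1 h2]; apply/negPn/negP => hz.
  have [p [/andP [hp1 hp2] hp]] := flip_rem h1 hzi1 hz.
  have [H _] := IH i p z (leqnn i) ltac:(alia) ltac:(alia) ltac:(alia).
  by move: H; rewrite hadd hp.
have F2 : forall t u, i < t <= m.+1 -> u \in v t -> le z u -> u = z.
  move=> t u /andP [h1 h2] hu hzu; case: (eqVneq u z) => // hne'; exfalso.
  have hui : u \notin v i.
    apply/negP => hui; have := (hV i ltac:(alia)).1 z u hzu hui.
    by rewrite (negbTE hzi).
  have [p [/andP [hp1 hp2] hp]] := flip_add (ltnW h1) hui hu.
  have hpi : p != i.
    apply/eqP => Ep; subst p; move/andP: hp => [a b].
    by move/eqP: hne'; apply; exact: add_uniq (hA i ltac:(alia)) a b hzi hzi1.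
  have hum : u \notin v m.+1.
    apply/negP => hum; have := (hV m.+1 (leqnn _)).1 z u hzu hum.
    by rewrite (negbTE hzm1).
  have [q [/andP [hq1 hq2] hq]] := flip_rem h2 hu hum.
  have hqm : q != m.
    apply/eqP => Eq; subst q; move/andP: hq => [a b].
    by move/eqP: hne'; apply; exact: rem_uniq (hA m (leqnn m)) a b hzm hzm1.
  have [H _] := IH p q u ltac:(alia) ltac:(alia) ltac:(alia) ltac:(alia).
  by move: H; rewrite hp hq.
have Wm : Wk v z m = v m.+1.
  apply/setP => u; rewrite /Wk !inE.
  case: (eqVneq u z) => [->|hu] /=; first by rewrite (negbTE hzm1).
  case hum1 : (u \in v m.+1); first by rewrite orbT.
  rewrite orbF; apply/negP => hum.
  by move/eqP: hu; apply; exact: rem_uniq (hA m (leqnn m)) hum (negbT hum1) hzm hzm1.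
have WV : forall t, i < t <= m -> Gvertex le n (Wk v z t).
  move=> t ht; split.
    move=> x y hxy; rewrite /Wk !inE => /andP [hyz hy].
    have hx : (x \in v t) || (x \in v t.+1).
      case/orP: hy => hy.
        by rewrite ((hV t ltac:(alia)).1 x y hxy hy).
      by rewrite ((hV t.+1 ltac:(alia)).1 x y hxy hy) orbT.
    rewrite hx andbT; apply/eqP => Ex; subst x.
    case/orP: hy => hy.
      by move/eqP: hyz; apply; apply: (F2 t) => //; alia.
    by move/eqP: hyz; apply; apply: (F2 t.+1) => //; alia.
  apply: card_W (hA t ltac:(alia)) (hV t ltac:(alia)).2 (hV t.+1 ltac:(alia)).2 _.
  by rewrite inE F1.
have cW : forall t, i < t <= m -> #|Wk v z t| = n by move=> t ht; exact: (WV t ht).2.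
have cV : forall t, t <= m.+1 -> #|v t| = n by move=> t ht; exact: (hV t ht).2.
split => //.
- have [x [y [Hx Hy]]] := adjP (hA i ltac:(alia)).
  apply: (adj_crit (a := x)).
  + by rewrite cV ?cW //; alia.
  + move=> u hu; rewrite /Wk !inE negb_and negbK negb_or => /orP [/eqP Ez | /andP [h1 h2]].
      by subst u; rewrite hu in hzi.
    have : u \in v i :\: v i.+1 by rewrite inE h1 hu.
    by rewrite Hx inE => /eqP.
  + apply/eqP => E.
    have : x \in v i :\: v i.+1 by rewrite Hx set11.
    rewrite inE => /andP [hx1 hx2].
    have : x \in Wk v z i.+1 by rewrite -E.
    rewrite /Wk !inE (negbTE hx1) /= => /andP [_ hx3].
    case: (ltnP 1 (m - i)) => hgap.
      have [_ H] := IH i i.+1 x (leqnn i) (ltnSn i) ltac:(alia) ltac:(alia).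
      by move: H; rewrite /remp /addp hx2 hx1 hx3.
    have Em : m = i.+1 by alia.
    subst m; move/eqP: hne; apply; by rewrite E Wm.
- move=> t ht.
  have [x [y [Hx Hy]]] := adjP (hA t ltac:(alia)).
  have hx : x \in v t :\: v t.+1 by rewrite Hx set11.
  move: hx; rewrite inE => /andP [hx1 hx2].
  apply: (adj_crit (a := x)).
  + by rewrite !cW //; alia.
  + move=> u; rewrite /Wk !inE negb_and negbK negb_or => /andP [hu1 hu2] /orP [/eqP Ez | /andP [h1 h2]].
      by rewrite Ez eqxx in hu1.
    have : u \in v t :\: v t.+1 by rewrite inE h1; case/orP: hu2 => // h; rewrite h in h1.
    by rewrite Hx inE => /eqP.
  + apply/negP => /eqP E.
    have hxW : x \in Wk v z t.
      rewrite /Wk !inE hx2 orTb andbT; apply/eqP => Ex; subst x.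
      by rewrite F1 in hx1 => //; alia.
    move: hxW; rewrite E /Wk !inE (negbTE hx1) /= => /andP [_ hx3].
    have [_ H] := IH t t.+1 x ltac:(alia) (ltnSn t) ltac:(alia) ltac:(alia).
    by move: H; rewrite /remp /addp hx2 hx1 hx3.
- move=> t ht; split.
  apply: (adj_crit (a := z)).
  + by rewrite cV ?cW //; alia.
  + move=> u hu; rewrite /Wk !inE negb_and negbK hu /= => /orP [/eqP // | //].
  + apply/eqP => E.
    have : z \in v t by apply: F1; alia.
    by rewrite E /Wk !inE eqxx.
  have [x [y [Hx Hy]]] := adjP (hA t ltac:(alia)).
  apply: (adj_crit (a := x)).
  + by rewrite cV ?cW //; alia.
  + move=> u; rewrite /Wk !inE => /andP [hu1 hu2] hu3.
    have : u \in v t :\: v t.+1 by rewrite inE hu3; case/orP: hu2 => // h; rewrite h in hu3.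
    by rewrite Hx inE => /eqP.
  + apply/eqP => E.
    have : z \in v t.+1 by apply: F1; alia.
    by rewrite -E /Wk !inE eqxx.
Qed.

Definition shortcut (T : finType) (le : rel T) n (v : nat -> {set T}) i m
  (W : nat -> {set T}) :=
 [/\ W m = v m.+1, forall t, i < t <= m -> Gvertex le n (W t),
     Gadj (v i) (W i.+1), forall t, i < t < m -> Gadj (W t) (W t.+1) &
     forall t, i < t < m -> Gadj (v t) (W t) /\ Gadj (W t) (v t.+1)].

Lemma core1 (T : finType) (le : rel T) (n : nat) (v : nat -> {set T}) (i m : nat) (z : T) :
  (forall t, t <= m.+1 -> Gvertex le n (v t)) ->
  (forall t, t <= m -> Gadj (v t) (v t.+1)) ->
  i < m -> addp v i z -> remp v m z ->
  (forall p q u, i <= p -> p < q -> q <= m -> q - p < m - i ->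
     ~~ (addp v p u && remp v q u) /\ ~~ (remp v p u && addp v q u)) ->
  v i != v i.+2 -> exists W, shortcut le n v i m W.
Proof.
move=> h1 h2 h3 h4 h5 h6 h7; exists (Wk v z).
by have [? ? ? ? ?] := core h1 h2 h3 h4 h5 h6 h7.
Qed.

Lemma core2 (T : finType) (le : rel T) (n : nat) (v : nat -> {set T}) (i m : nat) (z : T) :
  n <= #|T| ->
  (forall t, t <= m.+1 -> Gvertex le n (v t)) ->
  (forall t, t <= m -> Gadj (v t) (v t.+1)) ->
  i < m -> remp v i z -> addp v m z ->
  (forall p q u, i <= p -> p < q -> q <= m -> q - p < m - i ->
     ~~ (addp v p u && remp v q u) /\ ~~ (remp v p u && addp v q u)) ->
  v i != v i.+2 -> exists W, shortcut le n v i m W.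
Proof.
move=> hn hV hA him hr ha IH hne.
have := @core T (fun x y => le y x) (#|T| - n) (fun t => ~: v t) i m z.
case.
- by move=> t ht; apply: vertexC; apply: hV.
- by move=> t ht; apply: Gadj_C; apply: hA.
- exact: him.
- by move: hr; rewrite /addp /remp !inE negbK.
- by move: ha; rewrite /addp /remp !inE negbK.
- move=> p q u a b c d; have [A B] := IH p q u a b c d.
  by rewrite /addp /remp !inE !negbK; split.
- by rewrite (inj_eq (@setC_inj T)).
move=> Wm WV Wi WW Wvw.
exists (fun t => ~: Wk (fun t => ~: v t) z t); split.
- by rewrite Wm setCK.
- move=> t ht; apply: (vertexCr hn); rewrite setCK; exact: WV.
- by have := Gadj_C Wi; rewrite setCK.
- by move=> t ht; exact: Gadj_C (WW t ht).
- move=> t ht; have [A B] := Wvw t ht.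
  by split; [have := Gadj_C A | have := Gadj_C B]; rewrite setCK.
Qed.

Lemma iso_two (T : finType) (le : rel T) n (D : {set T}) (R1 R2 : rel 'I_n) :
  sub_iso le D R1 -> sub_iso le D R2 -> poset_iso R1 R2.
Proof.
case=> f1 [i1 D1 r1] [f2 [i2 D2 r2]].
have ex : forall i, exists j, f2 j = f1 i.
  move=> i; have : f1 i \in D by rewrite D1 imset_f.
  by rewrite D2 => /imsetP [j _ ->]; exists j.
pose s i := odflt i [pick j | f2 j == f1 i].
have hs : forall i, f2 (s i) = f1 i.
  move=> i; rewrite /s; case: pickP => [j /eqP //|H].
  by have [j hj] := ex i; have := H j; rewrite hj eqxx.
exists s; split.
  by apply: injF_bij => x y hxy; apply: i1; rewrite -!hs hxy.
by move=> x y; rewrite r1 r2 !hs.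
Qed.

Definition swalk (T : finType) (le : rel T) n k (P : 'I_k -> rel 'I_n)
    (w : nat -> {set T}) (L : nat) : Prop :=
  [/\ forall j, j <= L -> Gvertex le n (w j), forall j, j < L -> Gadj (w j) (w j.+1),
   2 <= L &
   exists a b c : 'I_k, [/\ [/\ a != b, b != c & a != c], sub_iso le (w 0) (P a),
     (forall j, 0 < j < L -> sub_iso le (w j) (P b)) & sub_iso le (w L) (P c)]].

Lemma walk_path (T : finType) (le : rel T) n k (P : 'I_k -> rel 'I_n) :
  Gamma_family P -> forall L w, swalk le P w L ->
  exists w' L', special_path le P w' L' /\ L' <= L.
Proof.
move=> HG; elim/ltn_ind => L IH w [hV hA h2 [a [b [c [hd ha hb hc]]]]].
have niso : forall (x y : 'I_k) D, x != y -> sub_iso le D (P x) -> sub_iso le D (P y) -> False.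
  by move=> x y D hxy h1 h3; apply: (HG.2 x y hxy); exact: iso_two h1 h3.
case: hd => hab hbc hac.
case: (classic (exists p q, p < q <= L /\ w p = w q)) => hex; last first.
  exists w, L; split => //; split; last first.
    by split => //; exists a, b, c; split.
  split => // x y hx hy hxy.
  case: (ltngtP x y) => // hlt; exfalso; apply: hex.
    by exists x, y; rewrite hlt hy.
  by exists y, x; rewrite hlt hx.
case: hex => p [q [/andP [hpq hqL] heq]].
have hp0 : 0 < p.
  case: p hpq heq => // hq0 heq; exfalso.
  case: (ltngtP q L) hqL => // hqL _.
    apply: (niso a b (w 0) hab ha); rewrite heq; apply: hb; alia.
  subst q; apply: (niso a c (w 0) hac ha); by rewrite heq.
have hqL' : q < L.
  case: (ltngtP q L) hqL => // hqL2 _; exfalso; subst q.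
  apply: (niso b c (w p) hbc); last by rewrite heq.
  apply: hb; alia.
pose w' s := if s <= p then w s else w (s + (q - p)).
have hlt : L - (q - p) < L by alia.
suff hsw : swalk le P w' (L - (q - p)).
  have [w'' [L'' [h1 h3]]] := IH (L - (q - p)) hlt w' hsw.
  by exists w'', L''; split => //; alia.
split.
- move=> j hj; rewrite /w' /=; case: ifP => _; apply: hV; alia.
- move=> j hj; rewrite /w' /=; case: ifP => h; case: ifP => h'.
  + apply: hA; alia.
  + have Ej : j = p by alia.
    subst j; have -> : p.+1 + (q - p) = q.+1 by alia.
    rewrite heq; apply: hA; alia.
  + exfalso; alia.
  + have -> : j.+1 + (q - p) = (j + (q - p)).+1 by alia.
    apply: hA; alia.
- alia.
- exists a, b, c; split => //.
  + move=> j hj; rewrite /w' /=; case: ifP => _; apply: hb; alia.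
  + rewrite /w' /= ifF; last alia.
    by have -> : L - (q - p) + (q - p) = L by alia.
Qed.

Lemma type_lemma (T : finType) (le : rel T) n k (P : 'I_k -> rel 'I_n)
    (v : nat -> {set T}) r (a b c : 'I_k) (D : {set T}) t :
  witness le P ->
  (forall j, j <= r -> Gvertex le n (v j)) ->
  (forall j, j < r -> Gadj (v j) (v j.+1)) ->
  [/\ a != b, b != c & a != c] ->
  sub_iso le (v 0) (P a) ->
  (forall j, 0 < j < r -> sub_iso le (v j) (P b)) ->
  sub_iso le (v r) (P c) ->
  (forall w L, swalk le P w L -> r <= L) ->
  Gvertex le n D -> 0 < t -> t.+2 <= r -> Gadj (v t) D -> Gadj D (v t.+1) ->
  sub_iso le D (P b).
Proof.
move=> HW hV hA [hab hbc hac] ha hb hc hmin hD ht0 htr h1 h2.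
have [tt htt] := HW.2.1 D hD.
case: (eqVneq tt b) => [<- // | htb].
case: (eqVneq tt a) => [Eta | hta].
  subst tt; exfalso.
  pose w s := if s == 0 then D else v (s + t).
  suff : swalk le P w (r - t) by move/hmin; alia.
  split.
  - move=> j hj; rewrite /w; case: ifP => _ //; apply: hV; alia.
  - move=> j hj; rewrite /w /=; case: ifP => /eqP hj0.
      by subst j; rewrite add1n.
    by rewrite addSn; apply: hA; alia.
  - alia.
  - exists a, b, c; split => //.
    + move=> j hj; rewrite /w; case: ifP => /eqP hj0; first by exfalso; alia.
      apply: hb; alia.
    + rewrite /w; case: ifP => /eqP hj0; first by exfalso; alia.
      by have -> : r - t + t = r by alia.
exfalso.
pose w s := if s <= t then v s else D.
suff : swalk le P w t.+1 by move/hmin; alia.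
split.
- move=> j hj; rewrite /w; case: ifP => _ //; apply: hV; alia.
- move=> j hj; rewrite /w /=; case: ifP => h; case: ifP => h'.
  + apply: hA; alia.
  + have Ej : j = t by alia.
    by subst j.
  + exfalso; alia.
  + exfalso; alia.
- alia.
- exists a, b, tt; split.
  + by split => //; rewrite eq_sym.
  + by rewrite /w leq0n.
  + move=> j hj; rewrite /w; case: ifP => h; last by exfalso; alia.
    apply: hb; alia.
  + by rewrite /w ltnn.
Qed.

Lemma shortcut_false (T : finType) (le : rel T) n k (P : 'I_k -> rel 'I_n)
    (v : nat -> {set T}) r (a b c : 'I_k) i m W :
  witness le P ->
  (forall j, j <= r -> Gvertex le n (v j)) ->
  (forall j, j < r -> Gadj (v j) (v j.+1)) ->
  [/\ a != b, b != c & a != c] ->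
  sub_iso le (v 0) (P a) ->
  (forall j, 0 < j < r -> sub_iso le (v j) (P b)) ->
  sub_iso le (v r) (P c) ->
  (forall w L, swalk le P w L -> r <= L) ->
  3 <= r -> i < m -> m < r -> shortcut le n v i m W -> False.
Proof.
move=> HW hV hA hd ha hb hc hmin hr3 him hmr [Wm WV Wi WW Wvw].
have Wt : forall t, i < t < m -> sub_iso le (W t) (P b).
  move=> t ht; have [h1 h2] := Wvw t ht.
  apply: (type_lemma HW hV hA hd ha hb hc hmin) h1 h2.
  + apply: WV; alia.
  + alia.
  + alia.
pose w s := if s <= i then v s else if s <= m then W s else v s.+1.
have wE1 : forall s, s <= i -> w s = v s by move=> s hs; rewrite /w hs.
have wE2 : forall s, i < s <= m -> w s = W s.
  move=> s hs; rewrite /w ifF; last alia. by rewrite ifT; last alia.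
have wE3 : forall s, m < s -> w s = v s.+1.
  move=> s hs; rewrite /w ifF; last alia. by rewrite ifF; last alia.
suff : swalk le P w r.-1 by move/hmin; alia.
split.
- move=> j hj; case: (leqP j i) => h1.
    rewrite wE1 //; apply: hV; alia.
  case: (leqP j m) => h2.
    rewrite wE2; last alia. apply: WV; alia.
  rewrite wE3 //; apply: hV; alia.
- move=> s hs; case: (ltnP s i) => h1.
    rewrite !wE1 //; [apply: hA; alia | alia].
  case: (ltnP s m) => h2.
    case: (eqVneq s i) => [Es|hsi].
      subst s; rewrite wE1 // wE2 //; alia.
    rewrite !wE2; [apply: WW; alia | alia | alia].
  case: (eqVneq s m) => [Es|hsm].
    subst s; rewrite wE2; last alia. rewrite wE3 // Wm; apply: hA; alia.
  rewrite !wE3; [apply: hA; alia | alia | alia].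
- alia.
- exists a, b, c; split => //.
  + move=> j hj; case: (leqP j i) => h1.
      rewrite wE1 //; apply: hb; alia.
    case: (ltnP j m) => h2.
      rewrite wE2; last alia. apply: Wt; alia.
    case: (eqVneq j m) => [Ej|hjm].
      subst j; rewrite wE2; last alia. rewrite Wm; apply: hb; alia.
    rewrite wE3; last alia. apply: hb; alia.
  + case: (ltnP m r.-1) => h.
      by rewrite wE3 // prednK //; alia.
    have Em : m = r.-1 by alia.
    by rewrite wE2; [rewrite -Em Wm Em prednK //; alia | alia].
Qed.

Theorem mainTheorem13 (n k : nat) (P : 'I_k -> rel 'I_n)
    (T : finType) (le : rel T) (v : nat -> {set T}) (r : nat) :
  3 <= k ->
  Gamma_family P ->
  witness le P ->
  special_path le P v r ->
  (forall (w : nat -> {set T}) (r' : nat), special_path le P w r' -> r <= r') ->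
  3 <= r ->
  \bigcup_(j < r.+1) v j = v 0 :|: v r /\
  r - 1 = #|v 0 :\: (v 0 :&: v r)| - 1 /\
  r - 1 = #|v r :\: (v 0 :&: v r)| - 1.
Proof.
move=> hk HG HW [[hV hA hD] [hr2 [a [b [c [hd ha hb hc]]]]]] hmin hr3.
have hminw : forall w L, swalk le P w L -> r <= L.
  move=> w L /(walk_path HG) [w' [L' [h1 h2]]].
  exact: leq_trans (hmin w' L' h1) h2.
have hn : #|v 0| = n := (hV 0 (leq0n r)).2.
have hnT : n <= #|T| by rewrite -hn max_card.
have NC : forall g p q u, q - p = g -> p < q -> q < r ->
    ~~ (addp v p u && remp v q u) /\ ~~ (remp v p u && addp v q u).
  elim/ltn_ind => g IH p q u hg hpq hqr.
  have IH' : forall p' q' u', p <= p' -> p' < q' -> q' <= q -> q' - p' < q - p ->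
      ~~ (addp v p' u' && remp v q' u') /\ ~~ (remp v p' u' && addp v q' u').
    move=> p' q' u' h1 h2 h3 h4.
    apply: (IH (q' - p')) => //; alia.
  have hne : v p != v p.+2.
    apply/eqP => E; have := hD p p.+2 ltac:(alia) ltac:(alia) E; alia.
  have hV' : forall t, t <= q.+1 -> Gvertex le n (v t) by move=> t ht; apply: hV; alia.
  have hA' : forall t, t <= q -> Gadj (v t) (v t.+1) by move=> t ht; apply: hA; alia.
  split; apply/negP => /andP [h1 h2].
    have [W hW] := core1 hV' hA' hpq h1 h2 IH' hne.
    exact: (shortcut_false HW hV hA hd ha hb hc hminw hr3 hpq hqr hW).
  have [W hW] := core2 hnT hV' hA' hpq h1 h2 IH' hne.
  exact: (shortcut_false HW hV hA hd ha hb hc hminw hr3 hpq hqr hW).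
have NC' : forall p q u, p < q -> q < r ->
    ~~ (addp v p u && remp v q u) /\ ~~ (remp v p u && addp v q u).
  by move=> p q u; exact: NC (q - p) p q u erefl.
have cnt : forall t, t <= r -> #|v 0 :\: v t| = t.
  elim => [|t IHt] ht; first by rewrite setDv cards0.
  have [x [y [Hx Hy]]] := adjP (hA t ht).
  have : x \in v t :\: v t.+1 by rewrite Hx set11.
  rewrite inE => /andP [hx1 hx2].
  have hx0 : x \in v 0.
    apply/negPn/negP => hx0.
    have [p [/andP [_ hp1] hp]] := flip_add (leq0n t) hx0 hx2.
    have [H _] := NC' p t x hp1 ht.
    by move: H; rewrite hp /remp hx2 hx1.
  have E : v 0 :\: v t.+1 = x |: (v 0 :\: v t).
    apply/setP => u; rewrite !inE.
    case: (eqVneq u x) => [->|hux] /=; first by rewrite hx0 hx1.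
    case hu0 : (u \in v 0); rewrite ?andbF // !andbT.
    case hut : (u \in v t); case hut1 : (u \in v t.+1) => //=.
      exfalso; move/eqP: hux; apply.
      have : u \in v t :\: v t.+1 by rewrite inE hut1 hut.
      by rewrite Hx inE => /eqP.
    have [p [/andP [_ hp1] hp]] := flip_rem (leq0n t) hu0 (negbT hut).
    have [_ H] := NC' p t u hp1 ht.
    by move: H; rewrite hp /addp hut hut1.
  rewrite E cardsU1 IHt; last alia.
  by rewrite !inE hx2 /= add1n.
have E1 : v 0 :\: (v 0 :&: v r) = v 0 :\: v r.
  by apply/setP => u; rewrite !inE; case: (u \in v 0); rewrite ?andbF ?andbT.
have E2 : v r :\: (v 0 :&: v r) = v r :\: v 0.
  by apply/setP => u; rewrite !inE; case: (u \in v r); rewrite ?andbF ?andbT ?andbC.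
have cr : #|v 0 :\: v r| = r := cnt r (leqnn r).
have cr' : #|v r :\: v 0| = r.
  by rewrite cardsD setIC (hV r (leqnn r)).2 -hn -cardsD.
split; last by rewrite E1 E2 cr cr'.
apply/eqP; rewrite eqEsubset; apply/andP; split.
  apply/subsetP => u /bigcupP [j _ hu]; rewrite inE.
  apply/negPn/negP; rewrite negb_or => /andP [h0 hr].
  have hj : j <= r by rewrite -ltnS ltn_ord.
  have [p [/andP [_ hp1] hp]] := flip_add (leq0n j) h0 hu.
  have [q [/andP [hq0 hq1] hq]] := flip_rem hj hu hr.
  have [H _] := NC' p q u ltac:(alia) hq1.
  by move: H; rewrite hp hq.
apply/subsetP => u; rewrite inE => /orP [h|h]; apply/bigcupP.
  by exists ord0.
by exists ord_max.
Qed.
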